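(* Let $m\ge2$, $\sigma_0=\pm1$ if $m$ is odd and $\sigma_0=(-1)^{m/2}$ if $m$ is even. Let $u_0\in\mathcal{F}_n$ for some $n<\infty$, and let $u$ be the solution of the Cauchy problem $\partial_t u+\sigma_0\partial_x^m u=0$, $u(x,0)=u_0(x)$, $x\in\mathbb{R}$. For $\tau>0$ let $q=(q_0,\dots,q_{m-1})$ be the solution of the hyperbolic system $$\partial_t q_0+\sigma_0\partial_x q_{m-1}=0,\qquad \tau\partial_t q_i+\sum_{j=1}^{m-1}p^*_{ij}\,\partial_x q_{j-1}=\sum_{j=1}^{m-1}p^*_{ij}\,q_j\quad(i=1,\dots,m-1),$$ with initial data $q_j(x,0)=\partial_x^j u_0(x)$, $j=0,\dots,m-1$. Then for every fixed $T\in[0,\infty)$, $$\sup_{x\in\mathbb{R}}|q_0(x,T)-u(x,T)|=\mathcal{O}(\tau)\quad\text{as }\tau\to0^+.$$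
   Context: $\mathcal{F}_n=\{v(x)=\sum_{j=1}^n\hat v_j e^{ik_jx}:\ \hat v_j,k_j\in\mathbb{R}\}$. The matrix $P^*=(p^*_{ij})_{i,j=1}^{m-1}$ is defined by $p^*_{ij}=0$ if $i+j\ne m$, $p^*_{ij}=\sigma_0(-1)^{j-1}$ if $i+j=m$ and $j\le m/2$, and $p^*_{ij}=\sigma_0(-1)^{m-j}$ if $i+j=m$ and $j>m/2$. For initial data in $\mathcal{F}_n$, both problems are solved mode by mode: each Fourier mode $e^{ik_jx}$ evolves independently, $u$ via $\hat u(t)=e^{-\sigma_0 t(ik_j)^m}\hat u(0)$ and $q$ via the linear ODE system obtained by substituting $q(x,t)=\hat q(t)e^{ik_jx}$. *)

(* Defs.v *)
From Stdlib Require Import Reals.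
From Coquelicot Require Import Coquelicot.
Open Scope R_scope.

Definition cexp (z : C) : C :=
  (exp (Re z) * cos (Im z), exp (Re z) * sin (Im z)).

Definition ci : C := (0, 1).

Fixpoint csum (f : nat -> C) (n : nat) : C :=
  match n with
  | O => 0%C
  | S n' => Cplus (csum f n') (f n')
  end.

Definition cderiv (f : R -> C) (t : R) (l : C) : Prop :=
  is_derive (fun s => Re (f s)) t (Re l) /\ is_derive (fun s => Im (f s)) t (Im l).

Definition sigma0_ok (m : nat) (sigma0 : R) : Prop :=
  (Nat.odd m = true -> sigma0 = 1 \/ sigma0 = -1) /\
  (Nat.even m = true -> sigma0 = (-1) ^ (Nat.div m 2)).

Definition pstar (m : nat) (sigma0 : R) (i j : nat) : R :=
  if negb (Nat.eqb (i + j) m) then 0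
  else if Nat.leb (2 * j) m then sigma0 * (-1) ^ (j - 1)
  else sigma0 * (-1) ^ (m - j).

(* Fourier-mode solution of d_t u + sigma0 d_x^m u = 0 with
   u0(x) = sum_{j<n} vh j e^{i k j x} *)
Definition u_sol (m : nat) (sigma0 : R) (n : nat) (vh k : nat -> R) (x t : R) : C :=
  csum (fun j => Cmult (Cmult (RtoC (vh j))
                    (cexp (Cmult (RtoC (- sigma0 * t)) (Cpow (Cmult ci (RtoC (k j))) m))))
                    (cexp (Cmult ci (RtoC (k j * x))))) n.

(* Q : nat -> R -> C  (components Q 0, ..., Q (m-1) of the Fourier coefficient
   vector of a single mode e^{i kk x}) solves the ODE system obtained by
   substituting q(x,t) = Q(t) e^{i kk x} into the hyperbolic system, with
   initial data Q_l(0) = (i kk)^l vh0 (i.e. q_l(x,0) = d_x^l of the mode). *)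
Definition mode_solution (m : nat) (sigma0 tau kk vh0 : R) (Q : nat -> R -> C) : Prop :=
  (forall l, (l < m)%nat -> Q l 0 = Cmult (Cpow (Cmult ci (RtoC kk)) l) (RtoC vh0)) /\
  (forall t, cderiv (Q 0%nat) t
                (Cmult (Copp (Cmult (RtoC sigma0) (Cmult ci (RtoC kk)))) (Q (m - 1)%nat t))) /\
  (forall i t, (1 <= i <= m - 1)%nat ->
     exists d, cderiv (Q i) t d /\
       Cplus (Cmult (RtoC tau) d)
             (csum (fun l => Cmult (RtoC (pstar m sigma0 i (S l)))
                                   (Cmult (Cmult ci (RtoC kk)) (Q l t))) (m - 1))
       = csum (fun l => Cmult (RtoC (pstar m sigma0 i (S l))) (Q (S l) t)) (m - 1)).

Definition q0_sol (n : nat) (k : nat -> R) (Qs : nat -> nat -> R -> C) (x t : R) : C :=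
  csum (fun j => Cmult (Qs j 0%nat t) (cexp (Cmult ci (RtoC (k j * x))))) n.

(* Main.v *)
Require Import Defs.
From Stdlib Require Import Reals Lra Lia.
From Coquelicot Require Import Coquelicot.
Open Scope R_scope.

Definition nsq (z:C) : R := fst z ^ 2 + snd z ^ 2.
Definition ip (a b : C) : R := fst a * fst b + snd a * snd b.
Fixpoint rs (f : nat -> R) (n:nat) : R :=
  match n with O => 0 | S n' => rs f n' + f n' end.

Lemma rs_ext f g n : (forall i, (i < n)%nat -> f i = g i) -> rs f n = rs g n.
Proof. induction n; simpl; intros H; auto. rewrite IHn by (intros; apply H; lia). rewrite H by lia. auto. Qed.

Lemma rs_front f n : rs f (S n) = f O + rs (fun i => f (S i)) n.
Proof. induction n; simpl in *. ring. rewrite IHn. ring. Qed.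

Lemma rs_rev f n : rs f n = rs (fun i => f (n - 1 - i)%nat) n.
Proof. induction n. auto.
 transitivity (rs f n + f n). reflexivity.
 rewrite (rs_front (fun i => f (S n - 1 - i)%nat)). rewrite IHn.
 replace (S n - 1 - 0)%nat with n by lia.
 rewrite (rs_ext (fun i => f (S n - 1 - S i)%nat) (fun i => f (n - 1 - i)%nat)).
 ring. intros; f_equal; lia. Qed.

Lemma rs_le f g n : (forall i, (i < n)%nat -> f i <= g i) -> rs f n <= rs g n.
Proof. induction n; simpl; intros H. lra. assert (f n <= g n) by (apply H; lia).
 assert (rs f n <= rs g n) by (apply IHn; intros; apply H; lia). lra. Qed.

Lemma rs_0 n : rs (fun _ => 0) n = 0.
Proof. induction n; simpl; auto. rewrite IHn; ring. Qed.

Lemma rs_plus f g n : rs (fun i => f i + g i) n = rs f n + rs g n.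
Proof. induction n; simpl. ring. rewrite IHn; ring. Qed.

Lemma rs_scal c f n : rs (fun i => c * f i) n = c * rs f n.
Proof. induction n; simpl. ring. rewrite IHn; ring. Qed.

Lemma rs_nonneg f n : (forall i, (i < n)%nat -> 0 <= f i) -> 0 <= rs f n.
Proof. intros H. rewrite <- (rs_0 n). apply rs_le. auto. Qed.

Lemma der_lin (f g : R -> R) t df dg a b: is_derive f t df -> is_derive g t dg -> is_derive (fun s => a * f s + b * g s) t (a*df + b*dg).
Proof. intros H1 H2.
 apply (is_derive_plus (fun s => a * f s) (fun s => b * g s)); apply is_derive_scal; auto. Qed.
Lemma der_mul (f g : R -> R) t df dg : is_derive f t df -> is_derive g t dg -> is_derive (fun s => f s * g s) t (df * g t + f t * dg).
Proof. intros H1 H2. apply (is_derive_mult f g); auto. intros; apply Rmult_comm. Qed.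

Lemma is_derive_rs (F : nat -> R -> R) (G : nat -> R) n t :
  (forall i, (i < n)%nat -> is_derive (F i) t (G i)) ->
  is_derive (fun s => rs (fun i => F i s) n) t (rs G n).
Proof. induction n; simpl; intros H.
 - apply (is_derive_const 0).
 - replace (rs G n + G n) with (1 * rs G n + 1 * G n) by ring.
   eapply is_derive_ext. 2: apply (der_lin (fun s => rs (fun i => F i s) n) (F n)). intros; simpl; ring.
   apply IHn; intros; apply H; lia. apply H; lia. Qed.

Lemma cderiv_nsq f t d : cderiv f t d -> is_derive (fun s => nsq (f s)) t (2 * ip (f t) d).
Proof. intros [H1 H2]. unfold nsq, ip.
 replace (2 * (fst (f t) * fst d + snd (f t) * snd d)) with
   ((fst d * fst (f t) + fst (f t) * fst d) + (snd d * snd (f t) + snd (f t) * snd d)) by ring.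
 eapply is_derive_ext. 2: apply (is_derive_plus (fun s => fst (f s) * fst (f s)) (fun s => snd (f s) * snd (f s))).
 intros s; unfold nsq; cbn. ring. apply der_mul; auto. apply der_mul; auto. Qed.

Lemma rs_minus f g n : rs (fun i => f i - g i) n = rs f n - rs g n.
Proof. induction n; simpl. ring. rewrite IHn; ring. Qed.

Lemma csum_single f N a : (a < N)%nat -> (forall l, (l < N)%nat -> l <> a -> f l = RtoC 0) -> csum f N = f a.
Proof. induction N; intros Ha H. lia. simpl.
 destruct (Nat.eq_dec a N) as [->|Hn].
 - replace (csum f N) with (RtoC 0). ring. clear IHN Ha.
   assert (forall M, (M <= N)%nat -> csum f M = RtoC 0).
   { induction M; simpl; intros; auto. rewrite IHM by lia. rewrite H by lia. ring. }
   symmetry; auto.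
 - rewrite IHN by (lia || (intros; apply H; lia)). rewrite (H N) by lia. ring. Qed.

Lemma csum_minus f g n : Cminus (csum f n) (csum g n) = csum (fun j => Cminus (f j) (g j)) n.
Proof. induction n; simpl. ring. rewrite <- IHn. ring. Qed.

Lemma Cmod_csum f n : Cmod (csum f n) <= rs (fun j => Cmod (f j)) n.
Proof. induction n; simpl. rewrite Cmod_0; lra.
 eapply Rle_trans. apply Cmod_triangle. lra. Qed.

Lemma ip_sym a b : ip a b = ip b a.
Proof. unfold ip; ring. Qed.
Lemma ip_scal a b (s:R) : ip a (Cmult (RtoC s) b) = s * ip a b.
Proof. destruct a, b; unfold ip; simpl; ring. Qed.
Lemma ip_minus a b c : ip a (Cminus b c) = ip a b - ip a c.
Proof. destruct a, b, c; unfold ip; simpl; ring. Qed.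
Lemma ip_plus a b c : ip a (Cplus b c) = ip a b + ip a c.
Proof. destruct a, b, c; unfold ip; simpl; ring. Qed.
Lemma ip_w a b kk : ip a (Cmult (0,kk) b) = - ip b (Cmult (0,kk) a).
Proof. destruct a, b; unfold ip; simpl; ring. Qed.
Lemma ip_self a : ip a a = nsq a.
Proof. unfold ip, nsq; ring. Qed.
Lemma nsq_ge0 a : 0 <= nsq a.
Proof. unfold nsq. nra. Qed.
Lemma nsq_mult a b : nsq (Cmult a b) = nsq a * nsq b.
Proof. destruct a, b; unfold nsq; simpl; ring. Qed.
Lemma young a b e : 0 < e -> 2 * ip a b <= e * nsq a + nsq b / e.
Proof. intros He. destruct a as [x y], b as [u v]; unfold ip, nsq; simpl.
 assert (0 <= (e*x - u)^2 / e + (e*y - v)^2 / e).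
 { apply Rplus_le_le_0_compat; apply Rdiv_le_0_compat; try apply pow2_ge_0; lra. }
 assert ((e*x - u)^2 / e + (e*y - v)^2 / e = e * (x^2+y^2) + (u^2+v^2)/e - 2*(x*u+y*v)) by (field; lra).
 lra. Qed.

Definition pp m s i := pstar m s i (m - i).

Lemma pstar_0 m s i j : (i + j <> m)%nat -> pstar m s i j = 0.
Proof. intros H. unfold pstar. destruct (Nat.eqb_spec (i+j) m); [lia|]. reflexivity. Qed.

Lemma m1pow_S i : (-1)^(S i) = - (-1)^i.
Proof. simpl; ring. Qed.
Lemma m1pow_sq i : (-1)^i * (-1)^i = 1.
Proof. rewrite <- Rpow_mult_distr. replace (-1 * -1) with 1 by ring. apply pow1. Qed.

Lemma sigma_sq m s : sigma0_ok m s -> s * s = 1.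
Proof. intros [Ho He]. destruct (Nat.even m) eqn:E.
 - rewrite He by auto. apply m1pow_sq.
 - assert (Nat.odd m = true) by (unfold Nat.odd; rewrite E; auto).
   destruct (Ho H) as [->| ->]; ring. Qed.

Lemma pp_val m s i : (1 <= i <= m - 1)%nat ->
  pp m s i = if Nat.leb (2 * (m - i)) m then s * (-1)^(m - i - 1) else s * (-1)^i.
Proof. intros H. unfold pp, pstar. destruct (Nat.eqb_spec (i + (m-i)) m); [|lia]. cbv beta iota.
 replace (m - (m - i))%nat with i by lia. reflexivity. Qed.

Lemma pp_sq m s i : sigma0_ok m s -> (1 <= i <= m - 1)%nat -> pp m s i * pp m s i = 1.
Proof. intros Hs Hi. rewrite pp_val by auto. pose proof (sigma_sq _ _ Hs).
 destruct (Nat.leb _ _).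
 - transitivity ((s*s) * ((-1)^(m-i-1) * (-1)^(m-i-1))). ring. rewrite m1pow_sq, H; ring.
 - transitivity ((s*s) * ((-1)^i * (-1)^i)). ring. rewrite m1pow_sq, H; ring. Qed.

Lemma pp_anti m s i : (1 <= i <= m - 1)%nat -> (2 * i <> m)%nat -> pp m s i + pp m s (m - i) = 0.
Proof. intros H1 H2. rewrite (pp_val m s i) by lia. rewrite (pp_val m s (m-i)) by lia.
 replace (m - (m - i))%nat with i by lia.
 destruct (Nat.leb_spec (2 * (m - i)) m); destruct (Nat.leb_spec (2 * i) m); try lia.
 - replace (m - i)%nat with (S (m - i - 1)) at 2 by lia. rewrite m1pow_S. ring.
 - replace i with (S (i - 1)) at 1 by lia. rewrite m1pow_S. ring. Qed.

Lemma pp_mid m s i : sigma0_ok m s -> (2 * i = m)%nat -> (1 <= i)%nat -> pp m s i = -1.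
Proof. intros [_ He] H1 H2. rewrite pp_val by lia.
 destruct (Nat.leb_spec (2 * (m - i)) m); try lia.
 assert (Nat.even m = true). { subst m. apply Nat.even_spec. exists i. lia. }
 rewrite (He H0). replace (Nat.div m 2) with i. 2:{ subst m. rewrite Nat.mul_comm, Nat.div_mul; lia. }
 replace (m - i - 1)%nat with (i - 1)%nat by lia.
 replace i with (S (i - 1)) at 1 by lia. rewrite m1pow_S.
 transitivity (- ((-1)^(i-1) * (-1)^(i-1))). ring. rewrite m1pow_sq; ring. Qed.

Definition qq m s i := match i with O => s | _ => pp m s i end.

Lemma qq_pos m s i : (1 <= i)%nat -> qq m s i = pp m s i.
Proof. destruct i; simpl; auto; lia. Qed.
Lemma qq_0 m s : qq m s 0 = s.
Proof. reflexivity. Qed.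

Lemma pp_last m s : (2 <= m)%nat -> pp m s (m - 1) = s.
Proof. intros Hm. rewrite pp_val by lia. destruct (Nat.leb_spec (2 * (m - (m - 1))) m); try lia.
 replace (m - (m-1) - 1)%nat with O by lia. simpl; ring. Qed.

Lemma qq_sym m s i : (2 <= m)%nat -> (i < m)%nat -> qq m s i = qq m s (m - 1 - i).
Proof. intros Hm Hi.
 destruct (Nat.eq_dec i 0) as [->|H0].
 { rewrite qq_0, qq_pos by lia. replace (m-1-0)%nat with (m-1)%nat by lia. rewrite pp_last; auto. }
 destruct (Nat.eq_dec i (m-1)) as [->|H1].
 { rewrite qq_pos by lia. replace (m-1-(m-1))%nat with O by lia. rewrite qq_0, pp_last; auto. }
 rewrite !qq_pos by lia. rewrite !pp_val by lia.
 destruct (Nat.leb_spec (2 * (m - i)) m); destruct (Nat.leb_spec (2 * (m - (m - 1 - i))) m);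
   f_equal; f_equal; lia. Qed.

Lemma rs_opp f n : rs (fun i => - f i) n = - rs f n.
Proof. induction n; simpl. ring. rewrite IHn; ring. Qed.

Lemma key m s (E : nat -> C) kk : (2 <= m)%nat -> sigma0_ok m s ->
  - s * ip (E O) (Cmult (0,kk) (E (m-1)%nat)) +
  rs (fun i => pp m s (S i) * (ip (E (S i)) (E (m-1-i)%nat) - ip (E (S i)) (Cmult (0,kk) (E (m-2-i)%nat)))) (m-1) <= 0.
Proof. intros Hm Hs.
 set (w := (0,kk)).
 set (A := rs (fun i => pp m s (S i) * ip (E (S i)) (E (m-1-i)%nat)) (m-1)).
 set (B := rs (fun i => qq m s i * ip (E i) (Cmult w (E (m-1-i)%nat))) m).
 assert (HB : B = s * ip (E O) (Cmult w (E (m-1)%nat)) +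
    rs (fun i => pp m s (S i) * ip (E (S i)) (Cmult w (E (m-2-i)%nat))) (m-1)).
 { unfold B. replace m with (S (m-1)) at 1 by lia. rewrite rs_front. rewrite qq_0.
   replace (m - 1 - 0)%nat with (m-1)%nat by lia. f_equal. apply rs_ext. intros i Hi.
   rewrite qq_pos by lia. do 4 f_equal. lia. }
 assert (HB0 : B = 0).
 { assert (B = - B).
   { unfold B at 1. rewrite rs_rev. unfold B. rewrite <- rs_opp.
     apply rs_ext. intros i Hi. unfold w; rewrite ip_w; fold w. rewrite <- qq_sym by lia.
     replace (m - 1 - (m - 1 - i))%nat with i by lia. fold w. ring. }
   lra. }
 assert (HA : A <= 0).
 { assert (2 * A = rs (fun i => (pp m s (S i) + pp m s (m - S i)) * ip (E (S i)) (E (m-1-i)%nat)) (m-1)).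
   { replace (2 * A) with (A + A) by ring. unfold A at 2. rewrite rs_rev. unfold A.
     rewrite <- rs_plus. apply rs_ext. intros i Hi.
     replace (S (m - 1 - 1 - i)) with (m - S i)%nat by lia.
     replace (m - 1 - (m - 1 - 1 - i))%nat with (S i) by lia.
     replace (m - S i)%nat with (m - 1 - i)%nat at 2 by lia.
     rewrite (ip_sym (E (m-1-i)%nat)). ring. }
   assert (rs (fun i => (pp m s (S i) + pp m s (m - S i)) * ip (E (S i)) (E (m-1-i)%nat)) (m-1) <= 0).
   { rewrite <- (rs_0 (m-1)). apply rs_le. intros i Hi.
     destruct (Nat.eq_dec (2 * S i) m).
     - replace (m - S i)%nat with (S i) by lia. rewrite pp_mid with (i := S i) by (auto; lia).
       replace (m - 1 - i)%nat with (S i) by lia. rewrite ip_self.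
       pose proof (nsq_ge0 (E (S i))). lra.
     - rewrite pp_anti by lia. lra. }
   lra. }
 assert (Hsplit : rs (fun i => pp m s (S i) * (ip (E (S i)) (E (m-1-i)%nat) - ip (E (S i)) (Cmult w (E (m-2-i)%nat)))) (m-1)
   = A - rs (fun i => pp m s (S i) * ip (E (S i)) (Cmult w (E (m-2-i)%nat))) (m-1)).
 { unfold A. rewrite <- rs_minus. apply rs_ext. intros; fold w; ring. }
 rewrite Hsplit. fold w. lra. Qed.

Definition Uf m s kk vh0 t := Cmult (RtoC vh0) (cexp (Cmult (RtoC (- s * t)) (Cpow (Cmult ci (RtoC kk)) m))).

Lemma Uf_deriv m s kk vh0 t :
  cderiv (Uf m s kk vh0) t (Cmult (Cmult (RtoC (-s)) (Cpow (Cmult ci (RtoC kk)) m)) (Uf m s kk vh0 t)).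
Proof. unfold Uf. destruct (Cpow (Cmult ci (RtoC kk)) m) as [a b].
 unfold cderiv, cexp; simpl; split; auto_derive; auto. all: unfold Rminus; ring. Qed.

Lemma Uf_0 m s kk vh0 : Uf m s kk vh0 0 = RtoC vh0.
Proof. unfold Uf. destruct (Cpow (Cmult ci (RtoC kk)) m) as [a b]. unfold cexp; simpl.
 assert (E1 : - s * 0 * a - 0 * b = 0) by ring. assert (E2 : - s * 0 * b + 0 * a = 0) by ring.
 rewrite E1, E2, exp_0, cos_0, sin_0. unfold Cmult, RtoC; simpl. f_equal; ring. Qed.

Lemma nsq_cexp z : nsq (cexp z) = exp (fst z) ^ 2.
Proof. unfold nsq, cexp, Re, Im; simpl. pose proof (sin2_cos2 (snd z)). unfold Rsqr in H.
 transitivity (exp (fst z) ^2 * (sin (snd z) * sin (snd z) + cos (snd z) * cos (snd z))). ring.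
 rewrite H; ring. Qed.

Lemma Uf_bound m s kk vh0 T t : sigma0_ok m s -> 0 <= t <= T ->
  nsq (Uf m s kk vh0 t) <= vh0 ^ 2 * exp (2 * (T * Rabs (fst (Cpow (Cmult ci (RtoC kk)) m)))).
Proof. intros Hs Ht. unfold Uf. rewrite nsq_mult, nsq_cexp.
 replace (nsq (RtoC vh0)) with (vh0^2) by (unfold nsq; simpl; ring).
 apply Rmult_le_compat_l. apply pow2_ge_0.
 destruct (Cpow (Cmult ci (RtoC kk)) m) as [a b]; simpl.
 rewrite Rmult_1_r, <- exp_plus.
 assert (- s * t * a - 0 * b <= T * Rabs a).
 { pose proof (sigma_sq _ _ Hs).
   assert (Rabs s = 1). { destruct (Rle_dec 0 s). rewrite Rabs_right by lra. nra. rewrite Rabs_left by lra. nra. }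
   replace (- s * t * a - 0 * b) with (- (s * t * a)) by ring.
   eapply Rle_trans. apply Rle_abs. rewrite Rabs_Ropp, !Rabs_mult, H0, (Rabs_right t) by lra.
   pose proof (Rabs_pos a). nra. }
 destruct (Req_dec (- s * t * a - 0 * b + (- s * t * a - 0 * b)) (2 * (T * Rabs a))) as [E|E].
 rewrite E; lra. left; apply exp_increasing; lra. Qed.

Definition wf kk := Cmult ci (RtoC kk).
Definition lamf m s kk := Cmult (RtoC (-s)) (Cpow (wf kk) m).
Fixpoint cc m s kk (j : nat) : C :=
  match j with
  | O => RtoC 0
  | S j' => Cplus (Cmult (wf kk) (cc m s kk j'))
                  (Cmult (Cmult (RtoC (pp m s (m - S j'))) (Cpow (wf kk) (m - S j'))) (lamf m s kk))
  end.
Definition gam m s kk tau j := Cplus (Cpow (wf kk) j) (Cmult (RtoC tau) (cc m s kk j)).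
Definition Ef m s kk vh0 tau (Q : nat -> R -> C) j t :=
  Cminus (Q j t) (Cmult (gam m s kk tau j) (Uf m s kk vh0 t)).
Definition DQ (Q : nat -> R -> C) j t : C :=
  (Derive (fun x => fst (Q j x)) t, Derive (fun x => snd (Q j x)) t).
Definition DEf m s kk vh0 tau (Q : nat -> R -> C) j t :=
  Cminus (DQ Q j t) (Cmult (gam m s kk tau j) (Cmult (lamf m s kk) (Uf m s kk vh0 t))).

Lemma wf_eq kk : wf kk = (0, kk).
Proof. unfold wf, ci, RtoC, Cmult; simpl. f_equal; ring. Qed.

Lemma DQ_spec Q j t d : cderiv (Q j) t d -> DQ Q j t = d.
Proof. intros [H1 H2]. unfold DQ. apply injective_projections; simpl.
 exact (is_derive_unique _ _ _ H1). exact (is_derive_unique _ _ _ H2). Qed.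

Lemma der_ext (f g : R -> R) t l l' : (forall s, f s = g s) -> l = l' -> is_derive f t l -> is_derive g t l'.
Proof. intros H1 H2 H3. subst l'. eapply is_derive_ext; eauto. Qed.

Lemma cderiv_lin f g c t df dg : cderiv f t df -> cderiv g t dg ->
  cderiv (fun s => Cminus (f s) (Cmult c (g s))) t (Cminus df (Cmult c dg)).
Proof. intros [F1 F2] [G1 G2]. unfold Re, Im in *. split; unfold Re, Im; simpl.
 - assert (H : is_derive (fun s => 1 * fst (f s) + (-1) * (fst c * fst (g s) + (- snd c) * snd (g s))) t
      (1 * fst df + (-1) * (fst c * fst dg + (- snd c) * snd dg))).
   { apply der_lin; auto. apply der_lin; auto. }
   eapply der_ext. 3: exact H. intros; simpl; ring. match goal with |- ?a = ?b => change (@eq R a b) end; ring.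
 - assert (H : is_derive (fun s => 1 * snd (f s) + (-1) * (fst c * snd (g s) + snd c * fst (g s))) t
      (1 * snd df + (-1) * (fst c * snd dg + snd c * fst dg))).
   { apply der_lin; auto. apply der_lin; auto. }
   eapply der_ext. 3: exact H. intros; simpl; ring. match goal with |- ?a = ?b => change (@eq R a b) end; ring.
Qed.

Lemma ode_Q0 m s tau kk vh0 Q t : mode_solution m s tau kk vh0 Q ->
  cderiv (Q O) t (DQ Q O t) /\ DQ Q O t = Cmult (Copp (Cmult (RtoC s) (wf kk))) (Q (m-1)%nat t).
Proof. intros [_ [H0 _]]. pose proof (H0 t) as H. rewrite (DQ_spec _ _ _ _ H). split; auto. Qed.

Lemma ode_Qi m s tau kk vh0 Q t i : mode_solution m s tau kk vh0 Q -> (2 <= m)%nat -> (1 <= i <= m - 1)%nat ->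
  cderiv (Q i) t (DQ Q i t) /\
  Cmult (RtoC tau) (DQ Q i t) = Cminus (Cmult (RtoC (pp m s i)) (Q (m-i)%nat t))
          (Cmult (RtoC (pp m s i)) (Cmult (wf kk) (Q (m-i-1)%nat t))).
Proof. intros [_ [_ H]] Hm Hi. destruct (H i t Hi) as [d [Hd Heq]].
 rewrite (DQ_spec _ _ _ _ Hd). split; auto.
 rewrite (csum_single _ (m-1) (m-i-1)) in Heq.
 rewrite (csum_single _ (m-1) (m-i-1)) in Heq.
 - replace (S (m - i - 1)) with (m - i)%nat in Heq by lia. unfold pp, wf. rewrite <- Heq. ring.
 - lia.
 - intros l Hl Hne. rewrite pstar_0 by lia. ring.
 - lia.
 - intros l Hl Hne. rewrite pstar_0 by lia. ring.
Qed.

Lemma Cpow_pred w m : (1 <= m)%nat -> Cpow w m = Cmult w (Cpow w (m-1)).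
Proof. intros H. replace m with (S (m-1)) at 1 by lia. reflexivity. Qed.

Lemma E0_id m s tau kk vh0 Q t : mode_solution m s tau kk vh0 Q -> (2 <= m)%nat ->
  DEf m s kk vh0 tau Q O t =
  Cminus (Cmult (Copp (Cmult (Cmult (RtoC s) (wf kk)) (Cmult (RtoC tau) (cc m s kk (m-1))))) (Uf m s kk vh0 t))
         (Cmult (RtoC s) (Cmult (wf kk) (Ef m s kk vh0 tau Q (m-1) t))).
Proof. intros Hq Hm. unfold DEf, Ef. rewrite (proj2 (ode_Q0 _ _ _ _ _ _ t Hq)).
 unfold gam, lamf. rewrite (Cpow_pred _ m) by lia.
 change (Cpow (wf kk) 0) with (RtoC 1). change (cc m s kk 0) with (RtoC 0).
 rewrite RtoC_opp. ring. Qed.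

Lemma cc_S m s kk j : cc m s kk (S j) = Cplus (Cmult (wf kk) (cc m s kk j))
   (Cmult (Cmult (RtoC (pp m s (m - S j))) (Cpow (wf kk) (m - S j))) (lamf m s kk)).
Proof. reflexivity. Qed.

Lemma Ei_id m s tau kk vh0 Q t i : mode_solution m s tau kk vh0 Q -> (2 <= m)%nat -> sigma0_ok m s ->
  (1 <= i <= m - 1)%nat ->
  Cmult (RtoC tau) (DEf m s kk vh0 tau Q i t) =
  Cplus (Cmult (Copp (Cmult (RtoC (tau*tau)) (Cmult (cc m s kk i) (lamf m s kk)))) (Uf m s kk vh0 t))
   (Cmult (RtoC (pp m s i)) (Cminus (Ef m s kk vh0 tau Q (m-i) t) (Cmult (wf kk) (Ef m s kk vh0 tau Q (m-i-1) t)))).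
Proof. intros Hq Hm Hs Hi. destruct (ode_Qi _ _ _ _ _ _ t i Hq Hm Hi) as [_ HD].
 unfold DEf, Ef.
 transitivity (Cminus (Cmult (RtoC tau) (DQ Q i t)) (Cmult (RtoC tau) (Cmult (gam m s kk tau i) (Cmult (lamf m s kk) (Uf m s kk vh0 t))))).
 ring. rewrite HD. unfold gam.
 replace (m - i)%nat with (S (m - i - 1)) by lia. rewrite cc_S.
 replace (m - S (m - i - 1))%nat with i by lia.
 rewrite (Cpow_pred _ (S (m - i - 1))) by lia. replace (S (m - i - 1) - 1)%nat with (m - i - 1)%nat by lia.
 pose proof (pp_sq m s i Hs Hi) as Hp.
 assert (Hpc : Cmult (RtoC (pp m s i)) (RtoC (pp m s i)) = RtoC 1) by (rewrite <- RtoC_mult, Hp; reflexivity).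
 set (p := RtoC (pp m s i)) in *. set (U := Uf m s kk vh0 t). set (w := wf kk).
 set (L := lamf m s kk). set (a := Cpow w (m - i - 1)). set (b := Cpow w i).
 set (c1 := cc m s kk (m - i - 1)). set (ci' := cc m s kk i).
 rewrite RtoC_mult.
 transitivity (Cplus (Cmult (Copp (Cmult (RtoC tau * RtoC tau) (Cmult ci' L))) U)
   (Cplus (Cmult p (Cminus (Cminus (Q (S (m - i - 1)) t) (Cmult (Cplus (Cmult w a) (Cmult (RtoC tau) (Cplus (Cmult w c1) (Cmult (Cmult p b) L)))) U))
      (Cmult w (Cminus (Q (m - i - 1)%nat t) (Cmult (Cplus a (Cmult (RtoC tau) c1)) U)))))
    (Cmult (Cminus (Cmult p p) (RtoC 1)) (Cmult (RtoC tau) (Cmult b (Cmult L U)))))).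
 2: { rewrite Hpc. ring. }
 ring.
Qed.

Lemma cderiv_E m s tau kk vh0 Q t j : mode_solution m s tau kk vh0 Q -> (2 <= m)%nat -> (j <= m - 1)%nat ->
  cderiv (fun x => Ef m s kk vh0 tau Q j x) t (DEf m s kk vh0 tau Q j t).
Proof. intros Hq Hm Hj. unfold Ef, DEf.
 apply cderiv_lin.
 - destruct j. apply (ode_Q0 _ _ _ _ _ _ t Hq). apply (ode_Qi _ _ _ _ _ _ t (S j) Hq Hm). lia.
 - apply Uf_deriv.
Qed.

Definition Hf m s kk vh0 tau Q t :=
  nsq (Ef m s kk vh0 tau Q O t) + tau * rs (fun i => nsq (Ef m s kk vh0 tau Q (S i) t)) (m-1).
Definition dHf m s kk vh0 tau Q t :=
  2 * ip (Ef m s kk vh0 tau Q O t) (DEf m s kk vh0 tau Q O t) +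
  tau * rs (fun i => 2 * ip (Ef m s kk vh0 tau Q (S i) t) (DEf m s kk vh0 tau Q (S i) t)) (m-1).

Lemma Hf_deriv m s tau kk vh0 Q t : mode_solution m s tau kk vh0 Q -> (2 <= m)%nat ->
  is_derive (Hf m s kk vh0 tau Q) t (dHf m s kk vh0 tau Q t).
Proof. intros Hq Hm. unfold Hf, dHf.
 eapply der_ext. 3: apply (der_lin (fun x => nsq (Ef m s kk vh0 tau Q O x))
     (fun x => rs (fun i => nsq (Ef m s kk vh0 tau Q (S i) x)) (m-1)) t
     (2 * ip (Ef m s kk vh0 tau Q O t) (DEf m s kk vh0 tau Q O t))
     (rs (fun i => 2 * ip (Ef m s kk vh0 tau Q (S i) t) (DEf m s kk vh0 tau Q (S i) t)) (m-1)) 1 tau).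
 intros; simpl; ring. match goal with |- ?a = ?b => change (@eq R a b) end; ring.
 apply cderiv_nsq. apply cderiv_E; auto; lia.
 apply (is_derive_rs (fun i x => nsq (Ef m s kk vh0 tau Q (S i) x))).
 intros i Hi. apply cderiv_nsq. apply cderiv_E; auto; lia.
Qed.

Definition BU m kk vh0 T := vh0 ^ 2 * exp (2 * (T * Rabs (fst (Cpow (Cmult ci (RtoC kk)) m)))).
Definition Kf m s kk vh0 T :=
  (nsq (Cmult (Cmult (RtoC s) (wf kk)) (cc m s kk (m-1))) +
   rs (fun i => nsq (Cmult (cc m s kk (S i)) (lamf m s kk))) (m-1)) * BU m kk vh0 T.

Lemma nsq_r0 A tau c U : nsq (Cmult (Copp (Cmult A (Cmult (RtoC tau) c))) U) = tau^2 * (nsq (Cmult A c) * nsq U).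
Proof. destruct A, c, U; unfold nsq; simpl; ring. Qed.
Lemma nsq_ri tau c L U : nsq (Cmult (Copp (Cmult (RtoC (tau*tau)) (Cmult c L))) U) = tau^4 * (nsq (Cmult c L) * nsq U).
Proof. destruct c, L, U; unfold nsq; simpl; ring. Qed.
Lemma ip_scal_l a b (s:R) : s * ip a b = ip a (Cmult (RtoC s) b).
Proof. rewrite ip_scal; auto. Qed.

Lemma dH_bound m s tau kk vh0 Q T t : mode_solution m s tau kk vh0 Q -> (2 <= m)%nat -> sigma0_ok m s ->
  0 < tau <= 1 -> 0 <= t <= T ->
  dHf m s kk vh0 tau Q t <= Hf m s kk vh0 tau Q t + tau^2 * Kf m s kk vh0 T.
Proof. intros Hq Hm Hs Htau Ht.
 set (E := fun j => Ef m s kk vh0 tau Q j t).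
 set (w := wf kk).
 pose proof (Uf_bound m s kk vh0 T t Hs Ht) as HU. fold (BU m kk vh0 T) in HU.
 set (B := BU m kk vh0 T) in *.
 set (U := Uf m s kk vh0 t) in *.
 assert (HB0 : 0 <= B) by (pose proof (nsq_ge0 U); lra).
 assert (T0 : 2 * ip (E O) (DEf m s kk vh0 tau Q O t) <=
   2 * (- s * ip (E O) (Cmult w (E (m-1)%nat))) + nsq (E O) + tau^2 * (nsq (Cmult (Cmult (RtoC s) w) (cc m s kk (m-1))) * B)).
 { rewrite (E0_id _ _ _ _ _ _ _ Hq Hm). fold w U. fold (E (m-1)%nat).
   rewrite ip_minus, ip_scal.
   pose proof (young (E O) (Cmult (Copp (Cmult (Cmult (RtoC s) w) (Cmult (RtoC tau) (cc m s kk (m - 1))))) U) 1 Rlt_0_1).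
   rewrite nsq_r0 in H.
   assert (nsq (Cmult (Cmult (RtoC s) w) (cc m s kk (m - 1))) * nsq U <= nsq (Cmult (Cmult (RtoC s) w) (cc m s kk (m - 1))) * B)
     by (apply Rmult_le_compat_l; auto; apply nsq_ge0).
   assert (0 <= tau^2) by (apply pow2_ge_0).
   assert (tau ^ 2 * (nsq (Cmult (Cmult (RtoC s) w) (cc m s kk (m - 1))) * nsq U) <= tau ^ 2 * (nsq (Cmult (Cmult (RtoC s) w) (cc m s kk (m - 1))) * B))
     by (apply Rmult_le_compat_l; auto).
   unfold Rdiv in H. rewrite Rinv_1 in H. lra. }
 assert (TI : forall i, (i < m - 1)%nat ->
   tau * (2 * ip (E (S i)) (DEf m s kk vh0 tau Q (S i) t)) <=
   2 * (pp m s (S i) * (ip (E (S i)) (E (m-1-i)%nat) - ip (E (S i)) (Cmult (0,kk) (E (m-2-i)%nat))))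
   + tau * nsq (E (S i)) + tau^2 * (nsq (Cmult (cc m s kk (S i)) (lamf m s kk)) * B)).
 { intros i Hi.
   replace (tau * (2 * ip (E (S i)) (DEf m s kk vh0 tau Q (S i) t))) with
     (2 * ip (E (S i)) (Cmult (RtoC tau) (DEf m s kk vh0 tau Q (S i) t))) by (rewrite ip_scal; ring).
   rewrite (Ei_id _ _ _ _ _ _ _ (S i) Hq Hm Hs) by lia.
   replace (m - S i)%nat with (m - 1 - i)%nat by lia. replace (m - 1 - i - 1)%nat with (m - 2 - i)%nat by lia.
   fold U. fold (E (m-1-i)%nat). fold (E (m-2-i)%nat).
   rewrite ip_plus, ip_scal, ip_minus. rewrite <- (wf_eq kk).
   pose proof (young (E (S i)) (Cmult (Copp (Cmult (RtoC (tau * tau)) (Cmult (cc m s kk (S i)) (lamf m s kk)))) U) tau (proj1 Htau)).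
   rewrite nsq_ri in H.
   set (N := nsq (Cmult (cc m s kk (S i)) (lamf m s kk))) in *.
   assert (0 <= N) by apply nsq_ge0.
   assert (tau ^ 4 * (N * nsq U) / tau <= tau^2 * (N * B)).
   { replace (tau ^ 4 * (N * nsq U) / tau) with (tau^2 * (tau * (N * nsq U))) by (field; lra).
     apply Rmult_le_compat_l. apply pow2_ge_0.
     assert (N * nsq U <= N * B) by (apply Rmult_le_compat_l; auto).
     assert (0 <= N * nsq U) by (apply Rmult_le_pos; auto; apply nsq_ge0). nra. }
   fold w. lra. }
 assert (SUM : tau * rs (fun i => 2 * ip (E (S i)) (DEf m s kk vh0 tau Q (S i) t)) (m-1) <=
   2 * rs (fun i => pp m s (S i) * (ip (E (S i)) (E (m-1-i)%nat) - ip (E (S i)) (Cmult (0,kk) (E (m-2-i)%nat)))) (m-1)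
   + tau * rs (fun i => nsq (E (S i))) (m-1) + tau^2 * (rs (fun i => nsq (Cmult (cc m s kk (S i)) (lamf m s kk))) (m-1) * B)).
 { rewrite <- rs_scal. eapply Rle_trans. apply rs_le. exact TI.
   rewrite !rs_plus. rewrite !rs_scal. right. f_equal. f_equal.
   transitivity (rs (fun i => B * nsq (Cmult (cc m s kk (S i)) (lamf m s kk))) (m-1)).
   apply rs_ext; intros; ring. rewrite rs_scal; ring. }
 pose proof (key m s E kk Hm Hs) as K.
 unfold dHf, Hf, Kf. fold B. rewrite <- (wf_eq kk) in K, SUM. fold w in K, SUM.
 unfold E in *. cbv beta in *.
 fold w. lra.
Qed.

Definition K1 m s kk vh0 := rs (fun i => nsq (Cmult (cc m s kk (S i)) (RtoC vh0))) (m-1).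

Lemma H0_bound m s tau kk vh0 Q : mode_solution m s tau kk vh0 Q -> (2 <= m)%nat -> 0 < tau <= 1 ->
  Hf m s kk vh0 tau Q 0 <= tau^2 * K1 m s kk vh0.
Proof. intros [Hi _] Hm Htau.
 assert (HE : forall j, (j < m)%nat -> Ef m s kk vh0 tau Q j 0 = Copp (Cmult (RtoC tau) (Cmult (cc m s kk j) (RtoC vh0)))).
 { intros j Hj. unfold Ef, gam. rewrite Uf_0, Hi by auto. unfold wf. ring. }
 unfold Hf, K1. rewrite HE by lia. change (cc m s kk 0) with (RtoC 0).
 replace (nsq (Copp (Cmult (RtoC tau) (Cmult (RtoC 0) (RtoC vh0))))) with 0 by (unfold nsq; simpl; ring).
 rewrite (rs_ext _ (fun i => tau^2 * nsq (Cmult (cc m s kk (S i)) (RtoC vh0)))).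
 2: { intros i Hi'. rewrite HE by lia. destruct (cc m s kk (S i)); unfold nsq; simpl; ring. }
 rewrite rs_scal.
 assert (0 <= rs (fun i => nsq (Cmult (cc m s kk (S i)) (RtoC vh0))) (m-1)) by (apply rs_nonneg; intros; apply nsq_ge0).
 set (R0 := rs (fun i => nsq (Cmult (cc m s kk (S i)) (RtoC vh0))) (m-1)) in *.
 assert (tau * (tau^2 * R0) <= 1 * (tau^2 * R0)).
 { apply Rmult_le_compat_r. apply Rmult_le_pos; auto. apply pow2_ge_0. lra. }
 lra. Qed.

Lemma Kf_ge0 m s kk vh0 T : 0 <= Kf m s kk vh0 T.
Proof. unfold Kf, BU. apply Rmult_le_pos.
 apply Rplus_le_le_0_compat. apply nsq_ge0. apply rs_nonneg; intros; apply nsq_ge0.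
 apply Rmult_le_pos. apply pow2_ge_0. left; apply exp_pos. Qed.

Lemma gronwall m s tau kk vh0 Q T : mode_solution m s tau kk vh0 Q -> (2 <= m)%nat -> sigma0_ok m s ->
  0 < tau <= 1 -> 0 <= T ->
  exp (-T) * Hf m s kk vh0 tau Q T - Kf m s kk vh0 T * tau^2 * T <= Hf m s kk vh0 tau Q 0.
Proof. intros Hq Hm Hs Htau HT.
 set (K := Kf m s kk vh0 T).
 set (phi := fun x => exp (-x) * Hf m s kk vh0 tau Q x - K * tau^2 * x).
 set (dphi := fun x => (- exp (-x)) * Hf m s kk vh0 tau Q x + exp (-x) * dHf m s kk vh0 tau Q x - K * tau^2).
 assert (D : forall x, is_derive phi x (dphi x)).
 { intros x. unfold phi, dphi.
   assert (Hex : is_derive (fun y => exp (-y)) x (- exp (-x))) by (auto_derive; auto; match goal with |- ?a = ?b => change (@eq R a b) end; ring).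
   pose proof (der_mul _ _ x _ _ Hex (Hf_deriv m s tau kk vh0 Q x Hq Hm)) as H1.
   assert (H2 : is_derive (fun y => y) x 1) by (auto_derive; auto).
   pose proof (der_lin _ _ x _ _ 1 (- (K * tau^2)) H1 H2) as H3.
   eapply der_ext. 3: exact H3. intros; simpl; ring.
   match goal with |- ?a = ?b => change (@eq R a b) end; cbv beta; ring. }
 destruct (Req_dec T 0) as [E0|E0].
 { subst T. rewrite Ropp_0, exp_0. lra. }
 destruct (MVT_cor3 phi dphi 0 T) as [c [Hc1 [Hc2 Hc]]]. lra.
 { intros x _ _. apply is_derive_Reals. apply D. }
 assert (dphi c <= 0).
 { unfold dphi. pose proof (dH_bound m s tau kk vh0 Q T c Hq Hm Hs Htau (conj Hc1 Hc2)) as HB.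
   fold K in HB. assert (0 < exp (-c)) by apply exp_pos.
   assert (exp (-c) <= 1). { rewrite <- exp_0. destruct (Req_dec c 0). subst; rewrite Ropp_0; lra. left; apply exp_increasing; lra. }
   assert (0 <= K) by apply Kf_ge0.
   assert (0 <= tau^2) by apply pow2_ge_0.
   assert (exp (-c) * dHf m s kk vh0 tau Q c <= exp (-c) * (Hf m s kk vh0 tau Q c + tau ^ 2 * K)) by (apply Rmult_le_compat_l; lra).
   assert (exp (-c) * (tau^2 * K) <= 1 * (tau^2*K)) by (apply Rmult_le_compat_r; nra).
   nra. }
 unfold phi in Hc. rewrite Ropp_0, exp_0 in Hc. nra. Qed.

Lemma mode_bound m s kk vh0 T : (2 <= m)%nat -> sigma0_ok m s -> 0 <= T ->
  exists Cm, 0 <= Cm /\ forall tau Q, 0 < tau <= 1 -> mode_solution m s tau kk vh0 Q ->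
    Cmod (Cminus (Q O T) (Uf m s kk vh0 T)) <= Cm * tau.
Proof. intros Hm Hs HT.
 set (Ck := exp T * (K1 m s kk vh0 + Kf m s kk vh0 T * T)).
 exists (sqrt Ck). split. apply sqrt_pos.
 intros tau Q Htau Hq.
 pose proof (gronwall m s tau kk vh0 Q T Hq Hm Hs Htau HT) as HG.
 pose proof (H0_bound m s tau kk vh0 Q Hq Hm Htau) as H0.
 assert (HK1 : 0 <= K1 m s kk vh0) by (apply rs_nonneg; intros; apply nsq_ge0).
 assert (HKf : 0 <= Kf m s kk vh0 T) by apply Kf_ge0.
 set (HT' := Hf m s kk vh0 tau Q T) in *.
 assert (HH : HT' <= Ck * tau^2).
 { assert (exp (-T) * HT' <= tau^2 * (K1 m s kk vh0 + Kf m s kk vh0 T * T)) by nra.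
   assert (Ee : exp T * exp (-T) = 1) by (rewrite <- exp_plus; replace (T + - T) with 0 by ring; apply exp_0).
   replace HT' with (exp T * (exp (-T) * HT')) by (rewrite <- Rmult_assoc, Ee; ring).
   unfold Ck. rewrite (Rmult_assoc (exp T)). apply Rmult_le_compat_l. left; apply exp_pos.
   lra. }
 assert (HE : nsq (Ef m s kk vh0 tau Q O T) <= HT').
 { unfold HT', Hf. assert (0 <= rs (fun i => nsq (Ef m s kk vh0 tau Q (S i) T)) (m-1)) by (apply rs_nonneg; intros; apply nsq_ge0).
   nra. }
 assert (HQ : Cminus (Q O T) (Uf m s kk vh0 T) = Ef m s kk vh0 tau Q O T).
 { unfold Ef, gam. change (Cpow (wf kk) 0) with (RtoC 1). change (cc m s kk 0) with (RtoC 0). ring. }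
 rewrite HQ. unfold Cmod. fold (nsq (Ef m s kk vh0 tau Q O T)).
 assert (0 <= Ck) by (unfold Ck; apply Rmult_le_pos; [left; apply exp_pos | nra]).
 replace (sqrt Ck * tau) with (sqrt (Ck * tau^2)).
 apply sqrt_le_1_alt. lra.
 rewrite sqrt_mult_alt by auto. rewrite sqrt_pow2 by lra. reflexivity. Qed.

Lemma all_modes m s vh k T n : (2 <= m)%nat -> sigma0_ok m s -> 0 <= T ->
  exists C, 0 <= C /\ forall j, (j < n)%nat -> forall tau Q, 0 < tau <= 1 ->
    mode_solution m s tau (k j) (vh j) Q -> Cmod (Cminus (Q O T) (Uf m s (k j) (vh j) T)) <= C * tau.
Proof. intros Hm Hs HT. induction n.
 - exists 0. split. lra. intros; lia.
 - destruct IHn as [C [HC H]]. destruct (mode_bound m s (k n) (vh n) T Hm Hs HT) as [Cm [HCm Hb]].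
   exists (C + Cm). split. lra. intros j Hj tau Q Htau Hq.
   destruct (Nat.eq_dec j n) as [->|Hne].
   + specialize (Hb tau Q Htau Hq). nra.
   + specialize (H j ltac:(lia) tau Q Htau Hq). nra.
Qed.

Lemma rs_const a n : rs (fun _ => a) n = INR n * a.
Proof. induction n; simpl rs. simpl; ring. rewrite IHn, S_INR; ring. Qed.

Lemma Cmod_eix r : Cmod (cexp (Cmult ci (RtoC r))) = 1.
Proof. unfold Cmod, cexp, ci, RtoC, Cmult, Re, Im; simpl.
 replace (0 * r - 1 * 0) with 0 by ring. replace (0 * 0 + 1 * r) with r by ring.
 rewrite exp_0. pose proof (sin2_cos2 r). unfold Rsqr in H.
 match goal with |- sqrt ?a = 1 => replace a with 1 by nra end. apply sqrt_1. Qed.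

Theorem theorem3 (m : nat) (sigma0 : R) (n : nat) (vh k : nat -> R) (T : R) :
  (2 <= m)%nat -> sigma0_ok m sigma0 -> 0 <= T ->
  exists Cst delta : R, 0 < Cst /\ 0 < delta /\
    forall tau : R, 0 < tau < delta ->
    forall Qs : nat -> nat -> R -> C,
      (forall j, (j < n)%nat -> mode_solution m sigma0 tau (k j) (vh j) (Qs j)) ->
      forall x : R, Cmod (Cminus (q0_sol n k Qs x T) (u_sol m sigma0 n vh k x T)) <= Cst * tau.
Proof. intros Hm Hs HT.
 destruct (all_modes m sigma0 vh k T n Hm Hs HT) as [C [HC H]].
 exists (INR n * C + 1), 1. split. pose proof (pos_INR n). nra. split. lra.
 intros tau Htau Qs HQ x.
 unfold q0_sol, u_sol. rewrite csum_minus.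
 eapply Rle_trans. apply Cmod_csum.
 eapply Rle_trans. apply (rs_le _ (fun _ => C * tau)).
 - intros j Hj.
   replace (Cminus (Cmult (Qs j O T) (cexp (Cmult ci (RtoC (k j * x)))))
      (Cmult (Cmult (RtoC (vh j)) (cexp (Cmult (RtoC (- sigma0 * T)) (Cpow (Cmult ci (RtoC (k j))) m))))
         (cexp (Cmult ci (RtoC (k j * x))))))
     with (Cmult (Cminus (Qs j O T) (Uf m sigma0 (k j) (vh j) T)) (cexp (Cmult ci (RtoC (k j * x))))).
   2: { unfold Uf. ring. }
   rewrite Cmod_mult, Cmod_eix, Rmult_1_r.
   apply H; auto. lra.
 - rewrite rs_const. pose proof (pos_INR n). nra.
Qed.
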